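(* Let $\alpha,\beta$ be integers different from $1$ with $v_2(\alpha-1)=v_2(\beta-1)=1$. Then $|G_2|=16$, the nilpotency class of $G_2$ is $3$, $o(a)=o(b)=o(c)=4$, and $G_2$ is isomorphic to the generalized quaternion group $Q_{16}$ of order $16$.
   Context: $G(\alpha,\beta)=\langle A,B\mid A^{[A,B]}=A^{\alpha},\ B^{[B,A]}=B^{\beta}\rangle$ with $[x,y]=x^{-1}y^{-1}xy$, $y^x=x^{-1}yx$, and $C=[A,B]$. The group $G(\alpha,\beta)$ is finite and nilpotent, hence the direct product of its Sylow subgroups; $G_2$ denotes its Sylow $2$-subgroup and $a,b,c$ denote the images of $A,B,C$ under the canonical projection $G(\alpha,\beta)\to G_2$. $v_2$ is the $2$-adic valuation and $o(x)$ the order of $x$. *)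

(* Defs.v *)
From HB Require Import structures.
From mathcomp Require Import all_boot all_order all_algebra all_fingroup all_solvable.
Set Implicit Arguments. Unset Strict Implicit. Unset Printing Implicit Defensive.
Import GRing.Theory Num.Theory.

Definition zexpg (gT : finGroupType) (x : gT) (k : int) : gT :=
  match k with
  | Posz n => (x ^+ n)%g
  | Negz n => (x ^- n.+1)%g
  end.

Definition v2 (z : int) : nat := logn 2 `|z|%N.

(* The defining relations of G(alpha,beta):
   A^[A,B] = A^alpha, B^[B,A] = B^beta.  MathComp's conventions agree with the
   paper: x ^ y = y^-1 x y and [~ x, y] = x^-1 y^-1 x y. *)
Definition Grels (alpha beta : int) (gT : finGroupType) (x y : gT) : Prop :=
  (x ^ [~ x, y])%g = zexpg x alpha /\ (y ^ [~ y, x])%g = zexpg y beta.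

(* (gT, a, b) presents the Sylow 2-subgroup G_2 of G(alpha,beta), with a, b the
   images of A, B: the group <<{a,b}>> is a finite 2-group generated by a, b
   satisfying the relations, and it is universal among such: for every finite
   2-group generated by x, y satisfying the relations there is a homomorphism
   sending a to x and b to y.  (Since G(alpha,beta) is finite nilpotent,
   G_2 = G / O_2'(G) is exactly the largest 2-group quotient of G.) *)
Definition is_G2 (alpha beta : int) (gT : finGroupType) (a b : gT) : Prop :=
  [/\ pgroup 2 <<[set a; b]>>%g,
      Grels alpha beta a b &
      forall (hT : finGroupType) (x y : hT),
        pgroup 2 <<[set x; y]>>%g -> Grels alpha beta x y ->
        exists f : {morphism <<[set a; b]>>%g >-> hT},
          f a = x /\ f b = y].

(* Main.v *)
Require Import Defs.
From HB Require Import structures.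
From mathcomp Require Import all_boot all_order all_algebra all_fingroup all_solvable.
From mathcomp Require Import zify.
Import GRing.Theory Num.Theory.
Set Implicit Arguments. Unset Strict Implicit. Unset Printing Implicit Defensive.

Lemma v2_mod (a : int) : v2 (a - 1)%R = 1%N -> modz a 4 = 3%R.
Proof.
rewrite /v2 => h.
have n0 : (0 < `|(a - 1)%R|)%N.
  by move: h; case: (absz _) => //; rewrite logn0.
have d2 : (2 ^ 1 %| `|(a - 1)%R|)%N by rewrite pfactor_dvdn // h.
have d4 : ~~ (2 ^ 2 %| `|(a - 1)%R|)%N by rewrite pfactor_dvdn // h.
move: d2 d4 => /=; lia.
Qed.



Local Open Scope group_scope.

Section Core.
Variable gT : finGroupType.
Implicit Types x y z a b : gT.

Lemma conj_comm a b : commute a b -> a ^ b = a.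
Proof. by move=> h; rewrite conjgE h mulKg. Qed.

Lemma comm_of_conj a b : a ^ b = a -> commute a b.
Proof. by move=> h; rewrite /commute conjgC h. Qed.

Lemma commute_commg z x y : commute z x -> commute z y -> commute z [~ x, y].
Proof.
move=> zx zy; rewrite commgEl conjgE.
by repeat apply: commuteM => //; apply: commuteV.
Qed.

Lemma conj_mulR x y : x ^ y = x * [~ x, y].
Proof. by rewrite commgEl mulKVg. Qed.

Lemma sqc x c z1 : commute z1 x -> commute z1 c -> x ^ c = x^-1 * z1 ->
  (x * c) ^+ 2 = c ^+ 2 * z1.
Proof.
move=> z1x z1c hx; rewrite !expg2 {1}(conjgC x c) hx -!mulgA; congr (_ * _).
by rewrite (mulgA z1 x c) z1x -mulgA mulKg z1c.
Qed.

Lemma stepA x y z1 : commute z1 x -> commute z1 y ->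
  x ^ [~ x, y] = x^-1 * z1 -> commute x ([~ x, y] ^+ 2).
Proof.
move=> zx zy hx; apply: comm_of_conj.
have zc := commute_commg zx zy.
rewrite expg2 conjgM hx conjMg conjVg hx (conj_comm zc) invMg invgK.
by rewrite -mulgA -zx mulKg.
Qed.

Lemma coreX x y z1 z2 : commute z1 x -> commute z1 y -> commute z2 x ->
  commute z2 y -> z1 ^+ 2 = 1 ->
  x ^ [~ x, y] = x^-1 * z1 -> y ^ [~ y, x] = y^-1 * z2 ->
  x ^+ 4 = 1 /\ x ^+ 2 = [~ x, y] ^+ 2 * z1.
Proof.
move=> z1x z1y z2x z2y z11 hx hy.
set c := [~ x, y].
have z1c : commute z1 c by apply: commute_commg.
have cx : commute x (c ^+ 2) by apply: (stepA z1x z1y hx).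
have cy : commute y (c ^+ 2).
  have := stepA z2y z2x hy; rewrite -invgR -/c expVgn.
  by move/commuteV; rewrite invgK.
have e1 : (x ^+ 2) ^ y = c ^+ 2 * z1.
  by rewrite conjXg conj_mulR -/c; apply: sqc.
have wy : commute (c ^+ 2 * z1) y.
  by apply/commute_sym; apply: commuteM => //; apply/commute_sym.
have e2 : x ^+ 2 = c ^+ 2 * z1.
  by rewrite -(conjgK y (x ^+ 2)) e1 conj_comm //; apply/commuteV.
have e3 : (x ^+ 2) ^ c = x ^- 2.
  rewrite conjXg hx expgMn; last by apply/commute_sym/commuteV.
  by rewrite z11 mulg1 expVgn.
have e4 : (x ^+ 2) ^ c = x ^+ 2.
  rewrite e2 conj_comm //; apply/commute_sym; apply: commuteM.
    exact: commuteX (commute_refl c).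
  exact/commute_sym.
split => //.
by rewrite (@expgnA _ x 2 2) expg2 -{1}e4 e3 mulVg.
Qed.

Lemma bridge x y (a : nat) : (a %% 4 = 3)%N -> 2.-elt x ->
  x ^ [~ x, y] = x ^+ a -> commute (x ^+ 4) y ->
  [/\ x ^ [~ x, y] = x^-1 * x ^+ a.+1, commute (x ^+ a.+1) x,
      commute (x ^+ a.+1) y & (x ^+ a.+1) ^+ 2 = 1].
Proof.
move=> a3 px hx h4.
have x4x : commute (x ^+ 4) x by apply/commute_sym/commuteX.
have ea : a.+1 = (4 * (a.+1 %/ 4))%N by lia.
split.
- by rewrite expgS mulKg.
- by apply/commute_sym/commuteX.
- by rewrite ea expgM; apply/commute_sym/commuteX/commute_sym.
have h4c : commute (x ^+ 4) [~ x, y] by apply: commute_commg.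
have e1 := conj_comm h4c; rewrite conjXg hx -expgM in e1.
have e2 : x ^+ (4 * (a - 1)) = 1.
  apply: (@mulIg _ (x ^+ 4)); rewrite -expgD mul1g -e1; congr (_ ^+ _); lia.
have [k ok] := p_natP px.
have d8 : (#[x] %| 8)%N.
  have : (#[x] %| 8 * ((a - 1) %/ 2))%N.
    have -> : (8 * ((a - 1) %/ 2) = 4 * (a - 1))%N by lia.
    by rewrite order_dvdn e2.
  rewrite Gauss_dvdl // ok; case: k ok => [|k] ok; first by rewrite coprime1n.
  by rewrite coprime_pexpl // coprime2n; apply/negP => /negP; lia.
apply/eqP; rewrite -expgM -order_dvdn; apply: dvdn_trans d8 _; lia.
Qed.

Lemma inv2 x : x ^+ 4 = 1 -> x ^- 2 = x ^+ 2.
Proof.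
move=> h; apply: (@mulgI _ (x ^+ 2)); rewrite mulgV -expgD; done.
Qed.

Lemma Q16rel x y : x ^+ 4 = 1 -> x ^+ 2 = y ^+ 2 -> x ^+ 2 = [~ x, y] ^+ 2 ->
  [/\ (x^-1 * y) ^+ 8 = 1, x ^+ 2 = (x^-1 * y) ^+ 4 & (x^-1 * y) ^ x = (x^-1 * y)^-1].
Proof.
move=> x4 xy xc.
have yx1 : y * x^-1 = y^-1 * x.
  apply: (@mulgI _ y); rewrite !mulgA -expg2 mulgV mul1g -xy.
  by rewrite expg2 mulgK.
have Xc : (x^-1 * y) ^+ 2 = [~ x, y].
  by rewrite expg2 commgEl conjgE -!mulgA (mulgA y) yx1 -!mulgA.
have X4 : (x^-1 * y) ^+ 4 = x ^+ 2 by rewrite (@expgM _ _ 2 2) Xc xc.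
split => //.
- by rewrite (@expgM _ _ 4 2) X4 -expgM.
rewrite conjgE invMg invgK !mulgA; congr (_ * x).
by rewrite -invMg -expg2 xy expg2 invMg -mulgA mulVg mulg1.
Qed.

End Core.

Lemma zexpg_nat (gT : finGroupType) (x : gT) (m : nat) (k : int) :
  (0 < m)%N -> x ^+ m = 1 -> zexpg x k = x ^+ absz (modz k m).
Proof.
move=> m0 xm; have dm : (#[x] %| m)%N by rewrite order_dvdn xm.
case: k => n /=.
  have -> : absz (modz n m) = (n %% m)%N by lia.
  by rewrite expg_mod.
have d : (#[x] %| absz (modz (Negz n) m) + n.+1)%N.
  apply: dvdn_trans dm _; apply/dvdnP; exists (absz (GRing.opp (divz (Negz n) m))).
  have := divz_eq (Negz n) m; have := modz_ge0 (Negz n) (d:=m); nia.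
move: d; rewrite order_dvdn expgD => /eqP h.
by rewrite -(mulg1_eq h) invgK.
Qed.

Lemma morph_zexpg (aT rT : finGroupType) (D : {group aT}) (f : {morphism D >-> rT}) x k :
  x \in D -> f (zexpg x k) = zexpg (f x) k.
Proof. by move=> Dx; case: k => n /=; rewrite ?morphV ?groupX ?morphX. Qed.

Lemma morph_Grels alpha beta (aT rT : finGroupType) (D : {group aT})
   (f : {morphism D >-> rT}) x y :
  x \in D -> y \in D -> Grels alpha beta x y -> Grels alpha beta (f x) (f y).
Proof.
move=> Dx Dy [h1 h2]; split.
  by rewrite -morphR // -morphJ ?groupR // h1 morph_zexpg.
by rewrite -morphR // -morphJ ?groupR // h2 morph_zexpg.
Qed.

Section Main.
Variables alpha beta : int.
Hypothesis ha : modz alpha 4 = 3%R.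
Hypothesis hb : modz beta 4 = 3%R.

Lemma zexpg_a (gT : finGroupType) (x : gT) (k : int) : modz k 4 = 3%R ->
  exists a, (a %% 4 = 3)%N /\ zexpg x k = x ^+ a.
Proof.
move=> hk; exists (absz (modz k (8 * #[x])%N)); split.
  have := divz_eq k (8 * #[x])%N; have := modz_ge0 k (d:=(8 * #[x])%N).
  have := order_gt0 x; nia.
apply: zexpg_nat; first by rewrite muln_gt0 order_gt0.
by rewrite mulnC expgM expg_order expg1n.
Qed.

Lemma grels_nat (hT : finGroupType) (x y : hT) : 2.-elt x -> 2.-elt y ->
  Grels alpha beta x y -> commute (x ^+ 4) y -> commute (y ^+ 4) x ->
  x ^+ 4 = 1 /\ y ^+ 4 = 1.
Proof.
move=> px py [h1 h2] cx cy.
have [a [a3 ea]] := zexpg_a x ha; have [b [b3 eb]] := zexpg_a y hb.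
rewrite ea in h1; rewrite eb in h2.
have [e1 c1x c1y s1] := bridge a3 px h1 cx.
have [e2 c2y c2x s2] := bridge b3 py h2 cy.
have [-> _] := coreX c1x c1y c2x c2y s1 e1 e2.
by have [-> _] := coreX c2y c2x c1y c1x s2 e2 e1.
Qed.

Lemma pow4 n : forall (hT : finGroupType) (x y : hT),
  (#|<<[set x; y]>>| <= n)%N -> 2.-group <<[set x; y]>> ->
  Grels alpha beta x y -> x ^+ 4 = 1 /\ y ^+ 4 = 1.
Proof.
elim: n => [|n IH] hT x y.
  by rewrite leqNgt cardG_gt0.
set G := <<[set x; y]>> => le pG R.
have Gx : x \in G by rewrite mem_gen ?set21.
have Gy : y \in G by rewrite mem_gen ?set22.
have [G1 | ntG] := eqVneq G 1%G.
  move: Gx Gy; rewrite G1 !inE => /eqP -> /eqP ->.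
  by rewrite expg1n.
have nG := pgroup_nil pG.
have ntZ : 'Z(G) != 1 by rewrite center_nil_eq1.
have pZ : 2.-group 'Z(G) := pgroupS (center_sub G) pG.
have [pr2 d2 _] := pgroup_pdiv pZ ntZ.
have [z Zz oz] := Cauchy pr2 d2.
pose N := <[z]>%G.
have sNZ : N \subset 'Z(G) by rewrite cycle_subG.
have nsN := sub_center_normal sNZ.
have nNG : G \subset 'N(N) := normal_norm nsN.
have ntN : N :!=: 1 by rewrite cycle_eq1 -order_eq1 oz.
have sNG : N \subset G := subset_trans sNZ (center_sub G).
have lt := ltn_quotient ntN sNG.
have Nx : x \in 'N(N) := subsetP nNG x Gx.
have Ny : y \in 'N(N) := subsetP nNG y Gy.
have eG : G / N = <<[set coset N x; coset N y]>>.
  rewrite /G quotient_gen; last by apply: subset_trans (subset_gen _) nNG.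
  by rewrite quotientU !quotient_set1.
have [h4x h4y] : coset N x ^+ 4 = 1 /\ coset N y ^+ 4 = 1.
  apply: IH.
- by rewrite -eG -ltnS; apply: leq_trans lt le.
- by rewrite -eG; apply: morphim_pgroup.
- exact: (morph_Grels (coset_morphism N) Nx Ny R).
have Z4x : x ^+ 4 \in 'Z(G).
  apply: (subsetP sNZ); apply: coset_idr; first by rewrite groupX.
  by rewrite morphX.
have Z4y : y ^+ 4 \in 'Z(G).
  apply: (subsetP sNZ); apply: coset_idr; first by rewrite groupX.
  by rewrite morphX.
move/centerP: Z4x => [_ cx]; move/centerP: Z4y => [_ cy].
apply: grels_nat => //; try exact: mem_p_elt pG _.
- exact: cx.
- exact: cy.
Qed.

End Main.

Section Pair.
Variables gT hT : finGroupType.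
Lemma pairM (a c : gT) (b d : hT) : ((a, b) : gT * hT) * (c, d) = (a * c, b * d).
Proof. by []. Qed.
Lemma pairV (a : gT) (b : hT) : ((a, b) : gT * hT)^-1 = (a^-1, b^-1).
Proof. by []. Qed.
Lemma pair1 : (1 : gT * hT) = (1, 1).
Proof. by []. Qed.
Lemma pairJ (a c : gT) (b d : hT) : ((a, b) : gT * hT) ^ (c, d) = (a ^ c, b ^ d).
Proof. by []. Qed.
Lemma pairX (a : gT) (b : hT) n : ((a, b) : gT * hT) ^+ n = (a ^+ n, b ^+ n).
Proof. by elim: n => // n IH; rewrite !expgS IH. Qed.
End Pair.


Lemma ord4 (gT : finGroupType) (g : gT) : g ^+ 4 = 1 -> g ^+ 2 != 1 -> #[g] = 4%N.
Proof.
move=> g4 g2; have d4 : (#[g] %| 4)%N by rewrite order_dvdn g4.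
have n2 : ~~ (#[g] %| 2)%N by rewrite order_dvdn.
have := dvdn_leq (isT : (0 < 4)%N) d4.
by move: (#[g]) d4 n2 => [|[|[|[|[|k]]]]].
Qed.

Lemma pow3 (gT : finGroupType) (g : gT) a : g ^+ 4 = 1 -> (a %% 4 = 3)%N -> g ^+ a = g^-1.
Proof.
move=> g4 a3; rewrite -(expg_mod _ g4) a3; symmetry; apply: mulg1_eq.
by rewrite -expgS.
Qed.

Section ModelAlg.
Variables (gT : finGroupType) (u v : gT).
Hypotheses (hv2 : v ^+ 2 = u ^+ 4) (huv : u ^ v = u^-1) (ov : #[v] = 4%N).

Lemma m_uv : u^-1 * v = v * u.
Proof. by rewrite conjgC conjVg huv invgK. Qed.

Lemma m_vu2 : (v * u) ^+ 2 = v ^+ 2.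
Proof. by rewrite !expg2 -mulgA (mulgA u) (conjgC u v) huv -mulgA mulVg mulg1. Qed.

Lemma m_c : [~ v, v * u] = u ^+ 2.
Proof.
rewrite commgEl conjgM (conj_comm (commute_refl v)) conjgE !mulgA.
by rewrite -(mulgA v^-1) -conjgE conjVg huv invgK expg2.
Qed.

Lemma m_v4 : v ^+ 4 = 1.
Proof. by rewrite -ov expg_order. Qed.

Lemma m_vu : v ^ u = v * u ^+ 2.
Proof. by rewrite conjgE mulgA m_uv -mulgA -expg2. Qed.

Lemma m_vinv : v ^+ 3 = v^-1.
Proof. by apply: (@pow3 _ v 3 m_v4). Qed.

Lemma m_rel1 : v ^ [~ v, v * u] = v^-1.
Proof.
rewrite m_c expg2 conjgM m_vu conjMg m_vu.
rewrite (conj_comm (commute_sym (commuteX 2 (commute_refl u)))).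
rewrite -mulgA -expgD -hv2 -expgS.
exact: m_vinv.
Qed.

Lemma m_rel2 : (v * u) ^ [~ v * u, v] = (v * u)^-1.
Proof.
rewrite -invgR m_c conjMg.
have e1 : v ^ (u ^+ 2)^-1 = v^-1.
  have r1 := m_rel1; rewrite m_c in r1.
  by apply: (@conjg_inj _ (u ^+ 2)); rewrite conjgKV conjVg r1 invgK.
rewrite e1 (conj_comm (commuteV (commuteX 2 (commute_refl u)))).
by rewrite invMg; apply: invg_inj; rewrite !invMg !invgK m_uv.
Qed.

End ModelAlg.

Lemma model : exists u v : 'Q_16, [/\ <<[set v; v * u]>> = 'Q_16, #[u] = 8%N, #[v] = 4%N,
  v ^+ 2 = u ^+ 4 & u ^ v = u^-1] /\ nil_class 'Q_16 = 3%N.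
Proof.
have n_gt2 : (2 < 4)%N by [].
have [[u v] gen [ov v2 uv]] := generators_quaternion n_gt2 (isog_refl 'Q_16).
have [_ _ _ defQ _] := extremal_generators_facts (isT : prime 2) gen.
have [_ [_ _ _ nc] _ _ _] := quaternion_structure n_gt2 gen (isog_refl _).
case: gen => _ _ ou _.
exists u, v; split => //; split => //.
apply/eqP; rewrite eqEsubset subsetT /= -{1}defQ.
have Gv : v \in <<[set v; v * u]>> by rewrite mem_gen ?set21.
have Gu : u \in <<[set v; v * u]>>.
  by have := groupM (groupVr Gv) (mem_gen (set22 v (v * u))); rewrite mulKg.
by rewrite mul_subG // cycle_subG.
Qed.

Section Univ.
Variables alpha beta : int.
Hypothesis ha : modz alpha 4 = 3%R.
Hypothesis hb : modz beta 4 = 3%R.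

Lemma grels_inv (hT : finGroupType) (x y : hT) : 2.-group <<[set x; y]>> ->
  Grels alpha beta x y ->
  [/\ x ^+ 4 = 1, y ^+ 4 = 1, x ^ [~ x, y] = x^-1 & y ^ [~ y, x] = y^-1].
Proof.
move=> pG R; have [x4 y4] := @pow4 _ _ ha hb _ _ _ _ (leqnn _) pG R.
case: R => h1 h2.
have [a [a3 ea]] := zexpg_a ha hb x ha; have [b [b3 eb]] := zexpg_a ha hb y hb.
by rewrite h1 h2 ea eb (pow3 x4 a3) (pow3 y4 b3).
Qed.

Lemma grels_q16 (hT : finGroupType) (x y : hT) : 2.-group <<[set x; y]>> ->
  Grels alpha beta x y ->
  [/\ (x^-1 * y) ^+ 8 = 1, x ^+ 2 = (x^-1 * y) ^+ 4 & (x^-1 * y) ^ x = (x^-1 * y)^-1].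
Proof.
move=> pG R; have [x4 y4 hx hy] := grels_inv pG R.
have c1 (z : hT) : commute 1 z by rewrite /commute mulg1 mul1g.
have e1 : x ^ [~ x, y] = x^-1 * 1 by rewrite mulg1.
have e2 : y ^ [~ y, x] = y^-1 * 1 by rewrite mulg1.
have [_ xc] := coreX (c1 x) (c1 y) (c1 x) (c1 y) (expg1n _ _) e1 e2.
have [_ yc] := coreX (c1 y) (c1 x) (c1 y) (c1 x) (expg1n _ _) e2 e1.
rewrite mulg1 in xc yc.
apply: Q16rel => //.
by rewrite yc mulg1 -invgR expVgn -xc inv2.
Qed.
End Univ.

Lemma hom_Q16 (gT : finGroupType) (K : {group gT}) (a b : gT) :
  a ^+ 8 = 1 -> b ^+ 2 = a ^+ 4 -> a ^ b = a^-1 -> <[a]> <*> <[b]> = K ->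
  K \homg Grp (x : y : x ^+ (2 ^ 4.-1), y ^+ 2 = x ^+ (2 ^ 4.-2), x ^ y = x^-1).
Proof.
move=> a8 b2 ab defK; apply/existsP; exists (a, b); rewrite /= !xpair_eqE.
by rewrite defK eqxx /=; apply/and3P; split; apply/eqP.
Qed.

Section Univ2.
Variables alpha beta : int.
Hypothesis ha : modz alpha 4 = 3%R.
Hypothesis hb : modz beta 4 = 3%R.

Lemma univ (u v : 'Q_16) : <<[set v; v * u]>> = 'Q_16 -> #[u] = 8%N ->
  v ^+ 2 = u ^+ 4 -> u ^ v = u^-1 ->
  forall (hT : finGroupType) (x y : hT), 2.-group <<[set x; y]>> -> Grels alpha beta x y ->
  exists f : {morphism <<[set v; v * u]>> >-> hT}, f v = x /\ f (v * u) = y.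
Proof.
move=> gen ou v2 uv hT x y pG R.
have [X8 x2 XJ] := grels_q16 ha hb pG R.
have n_gt2 : (2 < 4)%N by [].
pose p1 : ('Q_16 * hT)%type := (v, x).
pose p2 : ('Q_16 * hT)%type := (v * u, y).
pose H := <<[set p1; p2]>>%G.
pose U : ('Q_16 * hT)%type := (u, x^-1 * y).
have eU : U = p1^-1 * p2 by rewrite /U pairV pairM mulKg.
have Hp1 : p1 \in H by rewrite mem_gen ?set21.
have Hp2 : p2 \in H by rewrite mem_gen ?set22.
have HU : U \in H by rewrite eU groupM ?groupV.
have u8 : u ^+ 8 = 1 by apply/eqP; rewrite -order_dvdn ou.
have hom : H \homg 'Q_16.
  have := Grp_quaternion n_gt2 H => /= ->.
  apply: (hom_Q16 (a := U) (b := p1)).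
  - by rewrite /U pairX u8 X8.
  - by rewrite /U /p1 !pairX v2 x2.
  - by rewrite /U /p1 pairJ pairV uv XJ.
  apply/eqP; rewrite eqEsubset join_subG !cycle_subG HU Hp1 /= gen_subG.
  apply/subsetP => g; rewrite !inE => /orP[] /eqP ->.
    by rewrite mem_gen // inE cycle_id orbT.
  rewrite -(mulKVg p1 p2) -eU groupM //.
    by rewrite mem_gen // inE cycle_id orbT.
  by rewrite mem_gen // inE cycle_id.
have cQ : #|'Q_16| = 16%N := card_quaternion n_gt2.
have leH : (#|H| <= 16)%N by have := leq_homg hom; rewrite cQ.
pose phi := restrm_morphism (subsetT H) (fst_morphism _ _).
have imphi : phi @* H = 'Q_16.
  rewrite im_restrm morphim_gen ?subsetT // morphimU !morphim_set1 ?inE //.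
have injphi : 'injm phi.
  rewrite -card_im_injm eqn_leq leq_morphim /= imphi cQ.
  exact: leH.
pose psi := invm injphi.
pose F := fun g : 'Q_16 => (psi g).2.
have FM : {in <<[set v; v * u]>> &, {morph F : a b / a * b}}.
  move=> a b Da Db; rewrite /F /psi (morphM (invm_morphism injphi)) //= imphi inE //.
exists (Morphism FM) => /=; split.
  by rewrite /F /psi (_ : v = phi p1) // invmE.
by rewrite /F /psi (_ : v * u = phi p2) // invmE.
Qed.
End Univ2.

Unset Implicit Arguments.

Theorem theorem12p1 (alpha beta : int) :
  alpha != 1%R -> beta != 1%R ->
  v2 (alpha - 1)%R = 1%N -> v2 (beta - 1)%R = 1%N ->
  (exists (gT : finGroupType) (a b : gT), is_G2 alpha beta a b) /\
  (forall (gT : finGroupType) (a b : gT), is_G2 alpha beta a b ->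
     [/\ #|<<[set a; b]>>%g| = 16%N,
         nil_class <<[set a; b]>>%g = 3%N,
         [/\ #[a]%g = 4%N, #[b]%g = 4%N & #[[~ a, b]]%g = 4%N] &
         (<<[set a; b]>>%g \isog 'Q_16)%g]).
Proof.
move=> _ _ /v2_mod ha /v2_mod hb.
have [u [v [[gen ou ov v2 uv] nc]]] := model.
have n_gt2 : (2 < 4)%N by [].
have cQ : #|'Q_16| = 16%N := card_quaternion n_gt2.
have v4 : v ^+ 4 = 1 := m_v4 ov.
have vu4 : (v * u) ^+ 4 = 1.
  by rewrite (@expgM _ _ 2 2) (m_vu2 uv) -expgM.
have v2n : v ^+ 2 != 1.
  by apply/eqP => /eqP; rewrite -order_dvdn ov.
have pQ : 2.-group <<[set v; v * u]>> by rewrite gen /pgroup cQ.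
have RQ : Grels alpha beta v (v * u).
  have [a [a3 ea]] := zexpg_a ha hb v ha; have [b [b3 eb]] := zexpg_a ha hb (v * u) hb.
  split; first by rewrite ea (pow3 v4 a3) (m_rel1 v2 uv ov).
  by rewrite eb (pow3 vu4 b3) (m_rel2 v2 uv ov).
split.
  exists ('Q_16)%type, v, (v * u); split => //.
  move=> hT x y pG1 R1; have [f hf] := univ ha hb gen ou v2 uv pG1 R1; exists f; exact: hf.
move=> gT a b [pG R Un].
have [f [fa fb]] := univ ha hb gen ou v2 uv pG R.
have [g [ga gb]] := Un _ v (v * u) pQ RQ.
set G := <<[set a; b]>>.
have Ga : a \in G by rewrite mem_gen ?set21.
have Gb : b \in G by rewrite mem_gen ?set22.
have Qv : v \in <<[set v; v * u]>> by rewrite mem_gen ?set21.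
have Qvu : v * u \in <<[set v; v * u]>> by rewrite mem_gen ?set22.
have imf : f @* <<[set v; v * u]>> = G.
  by rewrite morphim_gen ?subset_gen // morphimU !morphim_set1 // fa fb.
have img : g @* G = 'Q_16.
  by rewrite morphim_gen ?subset_gen // morphimU !morphim_set1 // ga gb.
have le1 : (#|G| <= 16)%N.
  by have := leq_morphim f <<[set v; v * u]>>; rewrite imf gen cQ.
have le2 : (16 <= #|G|)%N by have := leq_morphim g G; rewrite img cQ.
have oG : #|G| = 16%N by apply/eqP; rewrite eqn_leq le1 le2.
have injg : 'injm g by rewrite -card_im_injm img cQ oG.
have iso : G \isog 'Q_16 by apply/isogP; exists g.
split => //.
- by rewrite (isog_nil_class iso) nc.
split.
- by rewrite -(order_injm injg Ga) ga.
- by rewrite -(order_injm injg Gb) gb; apply: ord4 => //; rewrite (m_vu2 uv).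
rewrite -(order_injm injg (groupR Ga Gb)) morphR // ga gb (m_c uv).
apply: ord4; first by rewrite -expgM; apply/eqP; rewrite -order_dvdn ou.
by rewrite -expgM -v2.
Qed.
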